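(* For all $n\ge1$ and all $k_1,\dots,k_n\in\mathbb N$, $H_{k_1}\circ\cdots\circ H_{k_n}(\partial\Delta)$ is the boundary of a triangle each of whose sides has negative slope.
   Context: $\Delta=\{(u,v)\in\mathbb R^2:u\ge0,v\ge0,u+v\le1\}$. For $k\in\mathbb N$, $H_k:\Delta\to\Delta$ is $H_k(u,v)=\frac{1}{k(1-v)+1-u}(v,1-v)$ (a projective map, sending line segments to line segments). A vertical side is regarded as having slope $-\infty$, which counts as negative. *)

(* Defs.v *)
From Stdlib Require Import Reals List.
Open Scope R_scope.

Definition Delta (p : R * R) : Prop :=
  0 <= fst p /\ 0 <= snd p /\ fst p + snd p <= 1.

Definition bdDelta (p : R * R) : Prop :=
  Delta p /\ (fst p = 0 \/ snd p = 0 \/ fst p + snd p = 1).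

Definition H (k : nat) (p : R * R) : R * R :=
  let u := fst p in let v := snd p in
  let d := INR k * (1 - v) + 1 - u in
  (v / d, (1 - v) / d).

(* Hcomp [k1; ...; kn] = H_{k1} o ... o H_{kn}. *)
Definition Hcomp (ks : list nat) : R * R -> R * R :=
  fold_right (fun k f => fun p => H k (f p)) (fun p => p) ks.

Definition on_segment (a b z : R * R) : Prop :=
  exists t, 0 <= t <= 1 /\
    z = ((1 - t) * fst a + t * fst b, (1 - t) * snd a + t * snd b).

Definition noncollinear (a b c : R * R) : Prop :=
  (fst b - fst a) * (snd c - snd a) - (snd b - snd a) * (fst c - fst a) <> 0.

Definition on_triangle_boundary (a b c z : R * R) : Prop :=
  on_segment a b z \/ on_segment b c z \/ on_segment c a z.

(* The segment [a,b] has negative slope; a vertical side has slope -oo,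
   which counts as negative. *)
Definition negative_slope (a b : R * R) : Prop :=
  fst a = fst b \/ (snd b - snd a) / (fst b - fst a) < 0.

(* Main.v *)
Require Import Defs.
From Stdlib Require Import Reals List Lra Lia Psatz.
Require Import Defs.
Open Scope R_scope.

Definition lerp (p q : R*R) (t : R) : R*R :=
  ((1 - t) * fst p + t * fst q, (1 - t) * snd p + t * snd q).

Definition wavg (al be t : R) (P Q : R*R) : R*R :=
  (((1-t)*al*fst P + t*be*fst Q)/((1-t)*al + t*be),
   ((1-t)*al*snd P + t*be*snd Q)/((1-t)*al + t*be)).

Definition Seg (F : R*R -> R*R) : Prop :=
  forall p q, Delta p -> Delta q -> exists al be, 0 < al /\ 0 < be /\
    forall t, 0 <= t <= 1 -> F (lerp p q t) = wavg al be t (F p) (F q).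

Definition MapsD (F : R*R -> R*R) : Prop := forall p, Delta p -> Delta (F p).

Lemma den_pos al be t : 0 < al -> 0 < be -> 0 <= t <= 1 -> 0 < (1-t)*al + t*be.
Proof. intros. nra. Qed.

Lemma wavg_lerp al be t P Q : 0 < al -> 0 < be -> 0 <= t <= 1 ->
  wavg al be t P Q = lerp P Q (t*be/((1-t)*al + t*be)).
Proof. intros Ha Hb Ht. pose proof (den_pos al be t Ha Hb Ht).
  unfold wavg, lerp. f_equal; field; lra. Qed.

Lemma phi_range al be t : 0 < al -> 0 < be -> 0 <= t <= 1 ->
  0 <= t*be/((1-t)*al + t*be) <= 1.
Proof. intros Ha Hb Ht. pose proof (den_pos al be t Ha Hb Ht).
  unfold Rdiv. set (D := (1-t)*al + t*be) in *.
  assert (D * / D = 1) by (field; lra).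
  assert (0 < / D) by (apply Rinv_0_lt_compat; lra).
  assert (0 <= t*be) by nra. assert (0 <= (1-t)*al) by nra.
  split.
  - apply Rmult_le_pos; lra.
  - assert (0 <= ((1-t)*al) * / D) by (apply Rmult_le_pos; lra).
    assert (t*be*/D = 1 - ((1-t)*al) * / D) by (unfold D in *; field; lra). lra. Qed.

Lemma Delta_lerp p q t : Delta p -> Delta q -> 0 <= t <= 1 -> Delta (lerp p q t).
Proof. destruct p as [u1 v1], q as [u2 v2]. unfold Delta, lerp; simpl. intros. nra. Qed.

Lemma H_d k p : (1 <= k)%nat -> Delta p -> 1 <= INR k * (1 - snd p) + 1 - fst p.
Proof. intros Hk Hp. apply (le_INR 1 k) in Hk. simpl in Hk.
  destruct p as [u v]; unfold Delta in *; simpl in *. nra. Qed.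

Lemma H_maps k : (1<=k)%nat -> MapsD (H k).
Proof. intros Hk p Hp. pose proof (H_d k p Hk Hp) as Hd.
  destruct p as [u v]. unfold Delta in *; unfold H; simpl in *.
  set (d := INR k * (1 - v) + 1 - u) in *.
  unfold Rdiv. assert (d * / d = 1) by (field; lra).
  assert (0 < / d) by (apply Rinv_0_lt_compat; lra).
  nra. Qed.

Lemma H_seg k : (1<=k)%nat -> Seg (H k).
Proof. intros Hk p q Hp Hq.
  pose proof (H_d k p Hk Hp) as Hd1. pose proof (H_d k q Hk Hq) as Hd2.
  exists (INR k * (1 - snd p) + 1 - fst p), (INR k * (1 - snd q) + 1 - fst q).
  split; [lra|split;[lra|]]. intros t Ht.
  pose proof (H_d k _ Hk (Delta_lerp p q t Hp Hq Ht)) as Hd3.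
  pose proof (den_pos _ _ t (Rlt_le_trans 0 1 _ Rlt_0_1 Hd1) (Rlt_le_trans 0 1 _ Rlt_0_1 Hd2) Ht) as HD.
  destruct p as [u1 v1], q as [u2 v2]. unfold H, lerp, wavg in *; cbn [fst snd] in *.
  f_equal; field; lra.
Qed.

Lemma Seg_comp F G : Seg F -> Seg G -> MapsD G -> Seg (fun p => F (G p)).
Proof. intros SF SG MG p q Hp Hq.
  destruct (SG p q Hp Hq) as [a [b [Ha [Hb HG]]]].
  destruct (SF (G p) (G q) (MG p Hp) (MG q Hq)) as [a' [b' [Ha' [Hb' HF]]]].
  exists (a*a'), (b*b'). split; [nra|split;[nra|]]. intros t Ht.
  rewrite HG by exact Ht. rewrite wavg_lerp by auto.
  rewrite HF by (apply phi_range; auto).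
  pose proof (den_pos a b t Ha Hb Ht).
  pose proof (den_pos (a*a') (b*b') t ltac:(nra) ltac:(nra) Ht).
  set (D := (1-t)*a + t*b) in *.
  assert (E1 : 1 - t*b/D = (1-t)*a/D) by (unfold D in *; field; lra).
  unfold wavg. rewrite E1.
  destruct (F (G p)) as [x1 y1], (F (G q)) as [x2 y2]; cbn [fst snd].
  f_equal; field; split; nra.
Qed.

Lemma Hcomp_app l1 l2 p : Hcomp (l1 ++ l2) p = Hcomp l1 (Hcomp l2 p).
Proof. induction l1 as [|k l IH]; simpl; [reflexivity|]. now rewrite IH. Qed.

Lemma Hcomp_single k p : Hcomp (k :: nil) p = H k p.
Proof. reflexivity. Qed.

Lemma Hcomp_props ks : (forall k, In k ks -> (1<=k)%nat) -> Seg (Hcomp ks) /\ MapsD (Hcomp ks).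
Proof. induction ks as [|k ks IH]; intros Hk.
  - split.
    + intros p q _ _. exists 1, 1. split; [lra|split;[lra|]]. intros t Ht.
      simpl. unfold lerp, wavg. f_equal; field; lra.
    + intros p Hp; exact Hp.
  - destruct IH as [S1 M1]. { intros; apply Hk; simpl; auto. }
    assert (Hk1 : (1 <= k)%nat) by (apply Hk; simpl; auto).
    split.
    + change (Seg (fun p => H k (Hcomp ks p))). apply Seg_comp; auto. apply H_seg; auto.
    + intros p Hp. change (Delta (H k (Hcomp ks p))). apply H_maps; auto.
Qed.

Lemma seg_image F P Q : Seg F -> Delta P -> Delta Q -> forall z,
  (exists t, 0<=t<=1 /\ z = F (lerp P Q t)) <-> on_segment (F P) (F Q) z.
Proof. intros SF HP HQ z. destruct (SF P Q HP HQ) as [a [b [Ha [Hb HF]]]]. split.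
  - intros [t [Ht Hz]]. unfold on_segment.
    exists (t*b/((1-t)*a + t*b)). split; [apply phi_range; auto|].
    rewrite Hz, HF, wavg_lerp by auto. reflexivity.
  - intros [s [Hs Hz]].
    exists (s*a/((1-s)*b + s*a)). split; [apply phi_range; auto|].
    rewrite HF by (apply phi_range; auto). rewrite wavg_lerp by (auto; apply phi_range; auto).
    pose proof (den_pos b a s Hb Ha Hs).
    set (E := (1-s)*b + s*a) in *.
    assert (E1 : 1 - s*a/E = (1-s)*b/E) by (unfold E in *; field; lra).
    rewrite E1.
    replace (s * a / E * b / ((1 - s) * b / E * a + s * a / E * b)) with s.
    + exact Hz.
    + unfold E in *. field. assert (0 < a*b) by nra. split; nra.
Qed.

Lemma bd_char p : bdDelta p <->
  (exists t, 0<=t<=1 /\ p = lerp (1,0) (0,1) t) \/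
  (exists t, 0<=t<=1 /\ p = lerp (0,1) (0,0) t) \/
  (exists t, 0<=t<=1 /\ p = lerp (0,0) (1,0) t).
Proof. split.
  - destruct p as [u v]; unfold bdDelta, Delta; simpl. intros [[H1 [H2 H3]] [E|[E|E]]].
    + right; left. exists (1-v). split; [lra|]. unfold lerp; simpl; f_equal; lra.
    + right; right. exists u. split; [lra|]. unfold lerp; simpl; f_equal; lra.
    + left. exists v. split; [lra|]. unfold lerp; simpl; f_equal; lra.
  - intros [[t [Ht E]]|[[t [Ht E]]|[t [Ht E]]]]; subst; unfold bdDelta, Delta, lerp; simpl;
      (split; [lra|]).
    + right; right; lra.
    + left; lra.
    + right; left; lra.
Qed.

Definition Iv (a b c : R*R) : Prop :=
  (fst a <= fst c <= fst b /\ snd a > snd c /\ snd c > snd b) \/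
  (fst b <= fst c <= fst a /\ snd b > snd c /\ snd c > snd a).

Lemma step A B C f1 f2 : 0 < f2 < f1 -> noncollinear A B C -> Iv A B C ->
  noncollinear (lerp C B f1) A (lerp C B f2) /\ Iv (lerp C B f1) A (lerp C B f2).
Proof. intros Hf Hnc Hiv. destruct A as [xa ya], B as [xb yb], C as [xc yc].
  unfold noncollinear, Iv, lerp in *; cbn [fst snd] in *. split.
  - intro E. apply Hnc.
    first [ apply (Rmult_eq_reg_l (f1 - f2)); [rewrite Rmult_0_r; rewrite <- E; ring | lra]
          | apply (Rmult_eq_reg_l (f2 - f1)); [rewrite Rmult_0_r; rewrite <- E; ring | lra] ].
  - destruct Hiv as [[[H1 H2] [H3 H4]]|[[H1 H2] [H3 H4]]].
    + right.
      assert (0 <= (f1-f2)*(xb-xc)) by (apply Rmult_le_pos; lra).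
      assert (0 <= f2*(xb-xc)) by (apply Rmult_le_pos; lra).
      assert (0 < (f1-f2)*(yc-yb)) by (apply Rmult_lt_0_compat; lra).
      assert (0 < f2*(yc-yb)) by (apply Rmult_lt_0_compat; lra).
      split; split; nra.
    + left.
      assert (0 <= (f1-f2)*(xc-xb)) by (apply Rmult_le_pos; lra).
      assert (0 <= f2*(xc-xb)) by (apply Rmult_le_pos; lra).
      assert (0 < (f1-f2)*(yb-yc)) by (apply Rmult_lt_0_compat; lra).
      assert (0 < f2*(yb-yc)) by (apply Rmult_lt_0_compat; lra).
      split; split; nra.
Qed.

Lemma ns1 p q : fst p <= fst q -> snd p > snd q -> negative_slope p q /\ negative_slope q p.
Proof. intros H1 H2. unfold negative_slope.
  destruct (Req_dec (fst p) (fst q)) as [E|E]; [split; left; auto|].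
  split; right.
  - assert (0 < /(fst q - fst p)) by (apply Rinv_0_lt_compat; lra). unfold Rdiv; nra.
  - assert (/(fst p - fst q) < 0) by (apply Rinv_lt_0_compat; lra). unfold Rdiv; nra.
Qed.

Lemma Iv_neg a b c : Iv a b c -> negative_slope a b /\ negative_slope b c /\ negative_slope c a.
Proof. intros [[[H1 H2] [H3 H4]]|[[H1 H2] [H3 H4]]].
  - destruct (ns1 a b) as [N1 _]; [lra|lra|].
    destruct (ns1 c b) as [_ N2]; [lra|lra|].
    destruct (ns1 a c) as [_ N3]; [lra|lra|]. auto.
  - destruct (ns1 b a) as [_ N1]; [lra|lra|].
    destruct (ns1 b c) as [N2 _]; [lra|lra|].
    destruct (ns1 c a) as [N3 _]; [lra|lra|]. auto.
Qed.

Lemma phi_mono a b s1 s2 : 0 < a -> 0 < b -> 0 < s1 -> s1 < s2 -> s2 <= 1 ->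
  0 < s1*b/((1-s1)*a+s1*b) < s2*b/((1-s2)*a+s2*b).
Proof. intros Ha Hb H1 H2 H3.
  pose proof (den_pos a b s1 Ha Hb ltac:(lra)) as D1.
  pose proof (den_pos a b s2 Ha Hb ltac:(lra)) as D2.
  split.
  - apply Rdiv_lt_0_compat; nra.
  - assert (E : s2*b/((1-s2)*a+s2*b) - s1*b/((1-s1)*a+s1*b)
       = (a*b*(s2-s1)) / (((1-s1)*a+s1*b)*((1-s2)*a+s2*b))) by (field; lra).
    assert (0 < (a*b*(s2-s1)) / (((1-s1)*a+s1*b)*((1-s2)*a+s2*b))).
    { apply Rdiv_lt_0_compat; [|nra]. apply Rmult_lt_0_compat; [nra|lra]. }
    lra.
Qed.

Lemma H10 k : (1<=k)%nat -> H k (1,0) = lerp (0,0) (0,1) (/INR k).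
Proof. intros Hk. apply (le_INR 1 k) in Hk. simpl in Hk.
  unfold H, lerp; cbn [fst snd]. f_equal; field; lra. Qed.

Lemma H01 k : H k (0,1) = (1,0).
Proof. unfold H; cbn [fst snd]. f_equal; field. Qed.

Lemma H00 k : H k (0,0) = lerp (0,0) (0,1) (/(INR k + 1)).
Proof. pose proof (pos_INR k) as Hp. unfold H, lerp; cbn [fst snd]. f_equal; field; lra. Qed.

Lemma D10 : Delta (1,0). Proof. unfold Delta; simpl; lra. Qed.
Lemma D01 : Delta (0,1). Proof. unfold Delta; simpl; lra. Qed.
Lemma D00 : Delta (0,0). Proof. unfold Delta; simpl; lra. Qed.

Lemma inv ks : ks <> nil -> (forall k, In k ks -> (1<=k)%nat) ->
  noncollinear (Hcomp ks (1,0)) (Hcomp ks (0,1)) (Hcomp ks (0,0)) /\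
  Iv (Hcomp ks (1,0)) (Hcomp ks (0,1)) (Hcomp ks (0,0)).
Proof.
  induction ks as [|x ks IH] using rev_ind; [intros E; now elim E|].
  intros _ Hk. assert (Hx : (1 <= x)%nat) by (apply Hk; apply in_or_app; right; simpl; auto).
  pose proof (le_INR 1 x Hx) as HxR. simpl in HxR.
  destruct ks as [|k0 ks'].
  - simpl app. rewrite !Hcomp_single, H01, H10, H00 by auto.
    unfold noncollinear, Iv, lerp; cbn [fst snd].
    assert (/(INR x + 1) < / INR x) by (apply Rinv_lt_contravar; nra).
    assert (0 < /(INR x + 1)) by (apply Rinv_0_lt_compat; lra).
    split; [nra|left; split; split; lra].
  - set (l := k0 :: ks') in *.
    assert (Hl : forall k, In k l -> (1<=k)%nat) by (intros; apply Hk; apply in_or_app; auto).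
    destruct (IH ltac:(discriminate) Hl) as [Hnc Hiv].
    destruct (Hcomp_props l Hl) as [SF MF].
    rewrite !Hcomp_app, !Hcomp_single, H01, H10, H00 by auto.
    destruct (SF (0,0) (0,1) D00 D01) as [a [b [Ha [Hb HF]]]].
    assert (R1 : 0 <= / INR x <= 1).
    { split; [left; apply Rinv_0_lt_compat; lra|].
      rewrite <- Rinv_1. apply Rinv_le_contravar; lra. }
    assert (R2 : 0 <= /(INR x + 1) <= 1).
    { split; [left; apply Rinv_0_lt_compat; lra|].
      rewrite <- Rinv_1. apply Rinv_le_contravar; lra. }
    rewrite (HF _ R1), (HF _ R2), !wavg_lerp by auto.
    apply step; auto.
    apply phi_mono; auto.
    + apply Rinv_0_lt_compat; lra.
    + apply Rinv_lt_contravar; nra.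
    + apply R1.
Qed.

Theorem proposition3p5 (ks : list nat) :
  (1 <= length ks)%nat ->
  (forall k, In k ks -> (1 <= k)%nat) ->
  exists a b c : R * R,
    noncollinear a b c /\
    negative_slope a b /\ negative_slope b c /\ negative_slope c a /\
    (forall z : R * R,
       (exists p, bdDelta p /\ z = Hcomp ks p) <-> on_triangle_boundary a b c z).
Proof.
  intros Hlen Hk.
  destruct (inv ks) as [Hnc Hiv]; [intro E; subst; simpl in Hlen; lia| exact Hk|].
  destruct (Hcomp_props ks Hk) as [SF MF].
  exists (Hcomp ks (1,0)), (Hcomp ks (0,1)), (Hcomp ks (0,0)).
  destruct (Iv_neg _ _ _ Hiv) as [N1 [N2 N3]].
  split; [exact Hnc|split;[exact N1|split;[exact N2|split;[exact N3|]]]].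
  intros z. unfold on_triangle_boundary. split.
  - intros [p [Hbd Hz]]. apply bd_char in Hbd.
    destruct Hbd as [[t [Ht E]]|[[t [Ht E]]|[t [Ht E]]]]; subst p.
    + left. apply (seg_image _ _ _ SF D10 D01). exists t; auto.
    + right; left. apply (seg_image _ _ _ SF D01 D00). exists t; auto.
    + right; right. apply (seg_image _ _ _ SF D00 D10). exists t; auto.
  - intros [S|[S|S]].
    + apply (seg_image _ _ _ SF D10 D01) in S. destruct S as [t [Ht Hz]].
      exists (lerp (1,0) (0,1) t). split; [apply bd_char; left; exists t; auto|exact Hz].
    + apply (seg_image _ _ _ SF D01 D00) in S. destruct S as [t [Ht Hz]].
      exists (lerp (0,1) (0,0) t). split; [apply bd_char; right; left; exists t; auto|exact Hz].
    + apply (seg_image _ _ _ SF D00 D10) in S. destruct S as [t [Ht Hz]].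
      exists (lerp (0,0) (1,0) t). split; [apply bd_char; right; right; exists t; auto|exact Hz].
Qed.
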